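(* Let $\pi$ be a prior on $(P,\theta)\in\mathcal P\times\mathbb R^p$ satisfying the following condition (MD): the conditional prior of $(Y(P),\theta)$ given $(X(P),W(P))$ is absolutely continuous with full support and a continuous density for all values of $(X(P),W(P))$; and for all $P\in\mathcal P$ and $\theta\in\mathbb R^p$, the posterior density of $\theta$ given $P$ satisfies \[ \pi(\theta\mid P)=h\bigl(Q_W(\theta;P),W(P),\theta\bigr)\,c(P) \] for some non-negative function $h$ that is twice continuously differentiable in its first argument and continuously differentiable in $\theta$, where $c(P)$ is the normalizing constant making $\int\pi(\theta\mid P)\,d\theta=1$. Then for all $P\in\mathcal P$, \[ \pi(\theta\mid P)=\pi\bigl(\theta\mid W(P),X(P),Y(P)\bigr), \] i.e. the posterior for $\theta$ depends on the data distribution $P$ only through $(W(P),X(P),Y(P))$.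
   Context: Let $\mathcal D$ be a set and $\mathcal P$ a set of probability distributions on $\mathcal D$; the distribution $P\in\mathcal P$ is observed. Fix integers $k>p\ge1$. Let $Y:\mathcal P\to\mathbb R^k$ and $X:\mathcal P\to\mathbb R^{k\times p}$ be known functions with $X(P)$ of full column rank for every $P$, and let $W(P)$ be a known symmetric positive definite $k\times k$ matrix depending on $P$. For $\theta\in\mathbb R^p$ define the moments $g(\theta;P)=Y(P)-X(P)\theta$ and the minimum distance objective $Q_W(\theta;P)=g(\theta;P)'W(P)g(\theta;P)$. A prior $\pi$ is a joint distribution over pairs $(P,\theta)$, and $\pi(\theta\mid P)$ denotes the posterior density of $\theta$ given $P$. *)

(* Defs.v *)
From HB Require Import structures.
From mathcomp Require Import all_boot all_order all_algebra.
From mathcomp Require Import all_classical all_reals all_analysis.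
Set Implicit Arguments. Unset Strict Implicit. Unset Printing Implicit Defensive.
Import Order.TTheory GRing.Theory Num.Theory.
Import numFieldNormedType.Exports.
Local Open Scope classical_set_scope.
Local Open Scope ring_scope.

(* Coordinates: R^n is represented measure-theoretically by n.-tuple R (with the
   product = Borel sigma-algebra of the library) and algebraically /
   topologically by column vectors 'cV[R]_n. *)
Definition tup2cv (R : realType) (n : nat) (t : n.-tuple R) : 'cV[R]_n :=
  \col_i tnth t i.
Definition cv2tup (R : realType) (n : nat) (v : 'cV[R]_n) : n.-tuple R :=
  [tuple v i 0 | i < n].

(* Lebesgue integral over R^n of a function (used for non-negative functions),
   as the iterated one-dimensional Lebesgue integral (Tonelli). *)
Fixpoint leb_int (R : realType) (n : nat) : (n.-tuple R -> \bar R) -> \bar R :=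
  match n return (n.-tuple R -> \bar R) -> \bar R with
  | 0 => fun f => f [tuple]
  | m.+1 => fun f =>
      (\int[@lebesgue_measure R]_x leb_int (fun t : m.-tuple R => f [tuple of x :: t]))%E
  end.

Definition sym_posdef (R : realType) (n : nat) (A : 'M[R]_n) : Prop :=
  A^T = A /\ forall v : 'cV[R]_n, v != 0 -> 0 < (v^T *m A *m v) 0 0.

Definition gmom (R : realType) (T : Type) (k p : nat)
  (Y : T -> 'cV[R]_k) (X : T -> 'M[R]_(k, p)) (P : T) (th : 'cV[R]_p) : 'cV[R]_k :=
  Y P - X P *m th.
Definition QW (R : realType) (T : Type) (k p : nat)
  (Y : T -> 'cV[R]_k) (X : T -> 'M[R]_(k, p)) (W : T -> 'M[R]_k)
  (th : 'cV[R]_p) (P : T) : R :=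
  ((gmom Y X P th)^T *m W P *m gmom Y X P th) 0 0.

(* post is (a version of) the posterior density pi(theta | P) w.r.t. Lebesgue
   measure on R^p, for the joint prior pi on (P, theta). *)
Definition is_posterior_density (R : realType) (d : measure_display)
  (Pset : measurableType d) (p : nat)
  (pi : probability (Pset * p.-tuple R)%type R) (post : Pset -> 'cV[R]_p -> R) : Prop :=
  (forall P th, 0 <= post P th) /\
  forall (A : set Pset) (B : set (p.-tuple R)), measurable A -> measurable B ->
    pi (A `*` B) =
    (\int[pi]_(z in A `*` [set: p.-tuple R])
       leb_int (fun t : p.-tuple R => (\1_B t * post z.1 (tup2cv t))%:E))%E.

(* f is a conditional density of (Y(P), theta) given (X(P), W(P)) under pi:
   for every event A in sigma(X, W) and every measurable E in R^k x R^p,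
   pi(P in A, (Y(P), theta) in E) = int_A  int_E f(X(P),W(P))(y,theta) dy dtheta dpi(P). *)
Definition is_cond_density_YT (R : realType) (d : measure_display)
  (Pset : measurableType d) (k p : nat)
  (pi : probability (Pset * p.-tuple R)%type R)
  (Y : Pset -> 'cV[R]_k) (X : Pset -> 'M[R]_(k, p)) (W : Pset -> 'M[R]_k)
  (f : 'M[R]_(k, p) -> 'M[R]_k -> 'cV[R]_k -> 'cV[R]_p -> R) : Prop :=
  (forall x w y th, 0 <= f x w y th) /\
  forall (D : set ('M[R]_(k, p) * 'M[R]_k)),
    <<s [set: ('M[R]_(k, p) * 'M[R]_k)%type], open >> D ->
    measurable [set P | D (X P, W P)] ->
    forall E : set (k.-tuple R * p.-tuple R), measurable E ->
      pi [set z | D (X z.1, W z.1) /\ E (cv2tup (Y z.1), z.2)] =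
      (\int[pi]_(z in [set P | D (X P, W P)] `*` [set: p.-tuple R])
         leb_int (fun y : k.-tuple R => leb_int (fun t : p.-tuple R =>
            (\1_E (y, t) * f (X z.1) (W z.1) (tup2cv y) (tup2cv t))%:E)))%E.

Definition full_support_density (R : realType) (k p : nat)
  (g : 'cV[R]_k -> 'cV[R]_p -> R) : Prop :=
  forall U : set ('cV[R]_k * 'cV[R]_p), open U -> U !=set0 ->
    (0 < leb_int (fun y : k.-tuple R => leb_int (fun t : p.-tuple R =>
            (\1_U (tup2cv y, tup2cv t) * g (tup2cv y) (tup2cv t))%:E)))%E.

Definition C2_real (R : realType) (g : R -> R) : Prop :=
  (forall q, derivable g q 1) /\ (forall q, derivable (derive1 g) q 1) /\
  continuous (derive1 (derive1 g)).

Definition C1_vec (R : realType) (p : nat) (g : 'cV[R]_p -> R) : Prop :=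
  (forall th, differentiable g th) /\
  (forall v : 'cV[R]_p, continuous (fun th => 'D_v g th)).

(* Main.v *)
Require Import Defs.
From HB Require Import structures.
From mathcomp Require Import all_boot all_order all_algebra.
From mathcomp Require Import all_classical all_reals all_analysis.
Import Order.TTheory GRing.Theory Num.Theory.
Import numFieldNormedType.Exports.
Local Open Scope classical_set_scope.
Local Open Scope ring_scope.
Import HBNNSimple.

Lemma int_scale_le d (T : measurableType d) (R : realType) (mu : {measure set T -> \bar R})
  (f : T -> \bar R) (k : R) : 0 < k -> (forall x, (0 <= f x)%E) ->
  (\int[mu]_x (k%:E * f x) <= k%:E * \int[mu]_x f x)%E.
Proof.
move=> k0 f0.
rewrite ge0_integralTE => [|x]; last by rewrite mule_ge0 // lee_fin ltW.
rewrite ge0_integralTE //.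
apply: ge_ereal_sup => _ [h /= hle <-].
have ki0 : 0 <= k^-1 by rewrite invr_ge0 ltW.
pose g := scale_nnsfun h ki0.
have -> : sintegral mu h = (k%:E * sintegral mu g)%E.
  rewrite /g (_ : scale_nnsfun h ki0 = (cst k^-1 \* h)%R :> (T -> R)) //.
  rewrite sintegralrM muleA -EFinM mulfV ?gt_eqF // mul1e //.
apply: lee_wpmul2l; first by rewrite lee_fin ltW.
apply: ereal_sup_ubound; exists g => //= x.
rewrite /g /= EFinM.
have := hle x.
move=> hx.
rewrite -[f x](@mul1e R) -(mulVf (lt0r_neq0 k0)) EFinM -muleA.
by apply: lee_wpmul2l => //; rewrite lee_fin.
Qed.

Lemma int_scale d (T : measurableType d) (R : realType) (mu : {measure set T -> \bar R})
  (f : T -> \bar R) (k : R) : 0 < k -> (forall x, (0 <= f x)%E) ->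
  (\int[mu]_x (k%:E * f x) = k%:E * \int[mu]_x f x)%E.
Proof.
move=> k0 f0; apply/eqP; rewrite eq_le int_scale_le //=.
have ki0 : 0 < k^-1 by rewrite invr_gt0.
have kf0 x : (0 <= k%:E * f x)%E by rewrite mule_ge0 // lee_fin ltW.
have := @int_scale_le _ _ _ mu _ _ ki0 kf0.
have -> : (fun x => k^-1%:E * (k%:E * f x))%E = f.
  by apply/funext => x; rewrite muleA -EFinM mulVf ?lt0r_neq0 // mul1e.
move=> H.
rewrite -[X in (_ <= X)%E](@mul1e R) -(mulfV (lt0r_neq0 k0)) EFinM -muleA.
by apply: lee_wpmul2l => //; rewrite lee_fin ltW.
Qed.

Lemma leb_int_ge0 (R : realType) (n : nat) (f : n.-tuple R -> \bar R) :
  (forall t, (0 <= f t)%E) -> (0 <= leb_int f)%E.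
Proof.
elim: n f => [|n IH] f f0 /=; first exact: f0.
by apply: integral_ge0 => x _; apply: IH.
Qed.

Lemma leb_int_scale (R : realType) (n : nat) (f : n.-tuple R -> \bar R) (k : R) :
  0 < k -> (forall t, (0 <= f t)%E) ->
  leb_int (fun t => k%:E * f t)%E = (k%:E * leb_int f)%E.
Proof.
elim: n f => [|n IH] f k0 f0 //=.
rewrite -int_scale //; last by move=> x; apply: leb_int_ge0.
by congr (integral _ _ _); apply/funext => x; rewrite IH.
Qed.

Lemma leb_int0 (R : realType) (n : nat) :
  leb_int (fun _ : n.-tuple R => 0%E) = 0%E.
Proof.
elim: n => [|n IH] //=.
by rewrite IH integral0.
Qed.
Theorem lemma1 (R : realType) (d : measure_display) (Pset : measurableType d)
  (k p : nat) (hpk : (1 <= p < k)%N)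
  (Y : Pset -> 'cV[R]_k) (X : Pset -> 'M[R]_(k, p)) (W : Pset -> 'M[R]_k)
  (hX : forall P, \rank (X P) = p)
  (hW : forall P, sym_posdef (W P))
  (pi : probability (Pset * p.-tuple R)%type R)
  (post : Pset -> 'cV[R]_p -> R)
  (hpost : is_posterior_density pi post)
  (* (MD), first part *)
  (hMD1 : exists f : 'M[R]_(k, p) -> 'M[R]_k -> 'cV[R]_k -> 'cV[R]_p -> R,
      is_cond_density_YT pi Y X W f /\
      forall P, continuous (fun yt : 'cV[R]_k * 'cV[R]_p => f (X P) (W P) yt.1 yt.2) /\
                full_support_density (f (X P) (W P)))
  (* (MD), second part *)
  (h : R -> 'M[R]_k -> 'cV[R]_p -> R) (c : Pset -> R)
  (h_ge0 : forall q w th, 0 <= h q w th)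
  (h_C2 : forall w th, C2_real (fun q => h q w th))
  (h_C1 : forall q w, C1_vec (fun th => h q w th))
  (hform : forall P th, post P th = h (QW Y X W th P) (W P) th * c P)
  (hnorm : forall P, leb_int (fun t : p.-tuple R => (post P (tup2cv t))%:E) = 1%E) :
  exists F : 'M[R]_k -> 'M[R]_(k, p) -> 'cV[R]_k -> 'cV[R]_p -> R,
    forall P th, post P th = F (W P) (X P) (Y P) th.
Proof.
have key : forall P P' th, W P = W P' -> X P = X P' -> Y P = Y P' ->
    post P th = post P' th.
  move=> P P' th eW eX eY.
  have eQ : forall th, QW Y X W th P = QW Y X W th P'.
    by move=> t; rewrite /QW /gmom eW eX eY.
  pose g t := h (QW Y X W t P) (W P) t.
  have gP t : post P t = g t * c P by rewrite hform.
  have gP' t : post P' t = g t * c P' by rewrite hform /g eQ eW.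
  have post0 : forall P t, 0 <= post P t by move=> ? ?; apply: hpost.1.
  have [g0|] := pselect (forall t, g t = 0).
    by rewrite gP gP' g0 !mul0r.
  move=> /existsNP [t0 gt0].
  have gt0' : 0 < g t0 by rewrite lt0r h_ge0 andbT; apply/eqP.
  have cge0 : forall Q, g t0 * c Q = post Q t0 -> 0 <= c Q.
    by move=> Q e; rewrite -(pmulr_rge0 _ gt0') e.
  have cP0 : 0 <= c P by apply: cge0; rewrite gP.
  have cP'0 : 0 <= c P' by apply: cge0; rewrite gP'.
  have cpos : forall Q, 0 <= c Q -> (forall t, post Q t = g t * c Q) -> 0 < c Q.
    move=> Q cQ gQ; rewrite lt0r cQ andbT; apply/eqP => cQ0.
    have := hnorm Q.
    have -> : (fun t : p.-tuple R => (post Q (tup2cv t))%:E) = (fun _ => 0%E).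
      by apply/funext => t; rewrite gQ cQ0 mulr0.
    by rewrite leb_int0 => /esym/eqP; rewrite eqe oner_eq0.
  have cPp := cpos _ cP0 gP.
  have cP'p := cpos _ cP'0 gP'.
  have r0 : 0 < c P' / c P by rewrite divr_gt0.
  have := hnorm P'.
  have -> : (fun t : p.-tuple R => (post P' (tup2cv t))%:E) =
     (fun t => (c P' / c P)%:E * (post P (tup2cv t))%:E)%E.
    apply/funext => t; rewrite -EFinM gP gP'; congr (_%:E).
    by rewrite mulrCA -mulrA [_^-1 * _]mulrC divff ?lt0r_neq0 // mulr1.
  rewrite leb_int_scale //; last by move=> t; rewrite lee_fin.
  rewrite hnorm mule1 => /eqP; rewrite eqe => /eqP r1.
  have : c P' = c P.
    by rewrite -(divfK (lt0r_neq0 cPp) (c P')) r1 mul1r.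
  by move=> e; rewrite gP gP' e.
exists (fun w x y th => match pselect (exists P, (W P, X P, Y P) = (w, x, y)) with
  | left e => post (projT1 (cid e)) th | right _ => 0 end).
move=> P th.
case: pselect => [e|n]; last by exfalso; apply: n; exists P.
case: (cid e) => P' /= [eW eX eY].
by apply: key.
Qed.
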